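(* Let $\mathbf y_t\in\mathbb{R}^q$ and $\mathbf z_t\in\mathbb{R}^m$, $1\le t\le T$, be observed (mean zero) time series, let $c,k\ge0$ be integers and $h\ge0$. Put $\mathbf x_t=(\mathbf z_t',\dots,\mathbf z_{t-c}')'\in\mathbb{R}^p$, $p=m(c+1)$, and let $\mathcal X_t$ be the $(k+1)\times p$ matrix with rows $\mathbf x_t',\dots,\mathbf x_{t-k}'$. For $\boldsymbol\beta\in\mathbb{R}^p$ and a $q\times(k+1)$ matrix $\boldsymbol\Gamma$ let $\mathbf e_{t+h|t}(\boldsymbol\beta,\boldsymbol\Gamma)=\mathbf y_{t+h}-\boldsymbol\Gamma\mathcal X_t\boldsymbol\beta$ and $$G_2(\boldsymbol\beta,\boldsymbol\Gamma)=\Big|\frac{1}{T-h-c-k}\sum_{t=c+k+1}^{T-h}\mathbf e_{t+h|t}(\boldsymbol\beta,\boldsymbol\Gamma)\mathbf e_{t+h|t}(\boldsymbol\beta,\boldsymbol\Gamma)'\Big|,$$ where $|\cdot|$ denotes the determinant. Let $(\widehat{\boldsymbol\beta},\widehat{\boldsymbol\Gamma})$ minimize $G_2$ and set $$\widehat{\boldsymbol\Sigma}=\frac{1}{T-c-k-h}\sum_{t=c+k+1}^{T-h}(\mathbf y_{t+h}-\widehat{\boldsymbol\Gamma}\mathcal X_t\widehat{\boldsymbol\beta})(\mathbf y_{t+h}-\widehat{\boldsymbol\Gamma}\mathcal X_t\widehat{\boldsymbol\beta})'.$$ Then (whenever the inverses below exist, in particular $|\widehat{\boldsymbol\Sigma}|>0$)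 $$\widehat{\boldsymbol\beta}=\Big[\frac{1}{T-c-k-h}\sum_{t=c+k+1}^{T-h}\mathcal X_t'\widehat{\boldsymbol\Gamma}'\widehat{\boldsymbol\Sigma}^{-1}\widehat{\boldsymbol\Gamma}\mathcal X_t\Big]^{-1}\Big[\frac{1}{T-c-k-h}\sum_{t=c+k+1}^{T-h}\mathcal X_t'\widehat{\boldsymbol\Gamma}'\widehat{\boldsymbol\Sigma}^{-1}\mathbf y_{t+h}\Big]$$ and $\widehat{\boldsymbol\Gamma}=\mathcal G(\widehat{\boldsymbol\beta})$, where $\mathcal G(\boldsymbol\beta)=\mathbf Y'\mathbf F(\boldsymbol\beta)(\mathbf F(\boldsymbol\beta)'\mathbf F(\boldsymbol\beta))^{-1}$.
   Context: $\mathbf f_t(\boldsymbol\beta)=\mathcal X_t\boldsymbol\beta\in\mathbb{R}^{k+1}$. $\mathbf F(\boldsymbol\beta)$ is the $(T-h-c-k)\times(k+1)$ matrix with rows $\mathbf f_t(\boldsymbol\beta)'$, $t=c+k+1,\dots,T-h$, and $\mathbf Y$ is the $(T-h-c-k)\times q$ matrix with corresponding rows $\mathbf y_{t+h}'$; $\mathcal G(\boldsymbol\beta)$ is the least squares coefficient matrix of regressing $\mathbf y_{t+h}$ on $\mathbf f_t(\boldsymbol\beta)$. *)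

(* Defs.v *)
From HB Require Import structures.
From mathcomp Require Import all_boot all_order all_algebra.
From mathcomp Require Import reals.

Import Order.TTheory GRing.Theory Num.Theory.
Local Open Scope ring_scope.

(* Data: y t in R^q and z t in R^m (only t = 1..T are used by the
   definitions below when t ranges over c+k+1 .. T-h). *)

(* x_t = (z_t', z_{t-1}', ..., z_{t-c}')' in R^p, p = (c+1) m
   (mxvec is row-major, so the entries are z_t, then z_{t-1}, ...) *)
Definition xvec {R : realType} (m c : nat) (z : nat -> 'cV[R]_m) (t : nat)
  : 'cV[R]_(c.+1 * m) :=
  (mxvec (\matrix_(j < c.+1, l < m) z (t - j)%N l 0))^T.

Definition calX {R : realType} (m c k : nat) (z : nat -> 'cV[R]_m) (t : nat)
  : 'M[R]_(k.+1, c.+1 * m) :=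
  \matrix_(i < k.+1, j < c.+1 * m) xvec m c z (t - i)%N j 0.

Definition Neff (c k h T : nat) : nat := (T - h - c - k)%N.

Definition tsum {R : realType} (c k h T : nat) n n' (F : nat -> 'M[R]_(n, n'))
  : 'M[R]_(n, n') :=
  \sum_((c + k).+1 <= t < (T - h).+1) F t.

Definition err {R : realType} (q m c k h : nat)
  (y : nat -> 'cV[R]_q) (z : nat -> 'cV[R]_m)
  (beta : 'cV[R]_(c.+1 * m)) (Gam : 'M[R]_(q, k.+1)) (t : nat) : 'cV[R]_q :=
  y (t + h)%N - Gam *m calX m c k z t *m beta.

Definition SigmaHat {R : realType} (q m c k h T : nat)
  (y : nat -> 'cV[R]_q) (z : nat -> 'cV[R]_m)
  (beta : 'cV[R]_(c.+1 * m)) (Gam : 'M[R]_(q, k.+1)) : 'M[R]_q :=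
  ((Neff c k h T)%:R)^-1 *:
    tsum c k h T q q
      (fun t => err q m c k h y z beta Gam t *m (err q m c k h y z beta Gam t)^T).

Definition G2 {R : realType} (q m c k h T : nat)
  (y : nat -> 'cV[R]_q) (z : nat -> 'cV[R]_m)
  (beta : 'cV[R]_(c.+1 * m)) (Gam : 'M[R]_(q, k.+1)) : R :=
  \det (SigmaHat q m c k h T y z beta Gam).

Definition fvec {R : realType} (m c k : nat) (z : nat -> 'cV[R]_m)
  (beta : 'cV[R]_(c.+1 * m)) (t : nat) : 'cV[R]_k.+1 :=
  calX m c k z t *m beta.

Definition Fmat {R : realType} (m c k h T : nat) (z : nat -> 'cV[R]_m)
  (beta : 'cV[R]_(c.+1 * m)) : 'M[R]_(Neff c k h T, k.+1) :=
  \matrix_(i < Neff c k h T, j < k.+1) fvec m c k z beta ((c + k).+1 + i)%N j 0.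

Definition Ymat {R : realType} (q c k h T : nat) (y : nat -> 'cV[R]_q)
  : 'M[R]_(Neff c k h T, q) :=
  \matrix_(i < Neff c k h T, j < q) y ((c + k).+1 + i + h)%N j 0.

Definition calG {R : realType} (q m c k h T : nat)
  (y : nat -> 'cV[R]_q) (z : nat -> 'cV[R]_m)
  (beta : 'cV[R]_(c.+1 * m)) : 'M[R]_(q, k.+1) :=
  (Ymat q c k h T y)^T *m Fmat m c k h T z beta
    *m invmx ((Fmat m c k h T z beta)^T *m Fmat m c k h T z beta).

(* Main.v *)
Require Import Defs.
From HB Require Import structures.
From mathcomp Require Import all_boot all_order all_algebra.
From mathcomp Require Import reals.
From mathcomp Require Import all_fingroup ring lra.
Import Order.TTheory GRing.Theory Num.Theory.
Local Open Scope ring_scope.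



Lemma prodX_aux (F : fieldType) (I : Type) (r : seq I) (f : I -> {poly F}) :
  'X^2 %| \prod_(i <- r) (1 + 'X * f i) - (1 + 'X * \sum_(i <- r) f i).
Proof.
elim: r => [|a r IH]; first by rewrite !big_nil mulr0 addr0 subrr dvdp0.
rewrite !big_cons.
set p := \prod_(i <- r) _; set s := \sum_(i <- r) _.
have -> : (1 + 'X * f a) * p - (1 + 'X * (f a + s)) =
   (1 + 'X * f a) * (p - (1 + 'X * s)) + 'X^2 * (f a * s) by ring.
by apply: dvdp_add; [apply: dvdp_mull | apply: dvdp_mulr; apply: dvdpp].
Qed.

Lemma det1X (F : fieldType) n (N : 'M[{poly F}]_n) :
  'X^2 %| \det (1%:M + 'X *: N) - (1 + 'X * \tr N).
Proof.
rewrite /determinant (bigD1 (1%g : 'S_n)) //= odd_perm1 expr0 mul1r.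
set S := \sum_(s | _) _.
have -> : \prod_i (1%:M + 'X *: N) i ((1%g : 'S_n) i) + S - (1 + 'X * \tr N)
  = (\prod_i (1 + 'X * N i i) - (1 + 'X * \sum_i N i i)) + S.
  rewrite /mxtrace (eq_bigr (fun i => 1 + 'X * N i i)); first by ring.
  by move=> i _; rewrite perm1 !mxE eqxx.
apply: dvdp_add; first exact: prodX_aux.
apply: (big_ind (fun p => 'X^2 %| p)); [exact: dvdp0 | by move=> x y; apply: dvdp_add |].
move=> s Hs.
have [i Hi] : exists i, s i != i.
  apply/existsP; apply: contraR Hs; rewrite negb_exists => /forallP H.
  apply/eqP/permP => i; rewrite perm1; apply/eqP; have := H i; by rewrite negbK.
have Hj : s (s i) != s i.
  by apply: contra Hi => /eqP /perm_inj ->.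
rewrite (bigD1 i) //= (bigD1 (s i)) //=.
rewrite !mxE eq_sym (negbTE Hi) eq_sym (negbTE Hj).
set r := \prod_(j | _) _.
rewrite !add0r; move: (N i (s i)) (N (s i) (s (s i))) r ((-1) ^+ s) => a b r0 sg.
have -> : sg * ('X * a * ('X * b * r0)) = 'X^2 * (sg * a * b * r0) by ring.
by apply: dvdp_mulr; apply: dvdpp.
Qed.



Lemma poly_bound (R : realFieldType) (p : {poly R}) (x : R) :
  `|x| <= 1 -> `|p.[x]| <= \sum_(i < size p) `|p`_i|.
Proof.
move=> hx; rewrite horner_coef.
apply: (le_trans (ler_norm_sum _ _ _)); apply: ler_sum => i _.
rewrite normrM normrX; apply: ler_piMr => //; exact: exprn_ile1.
Qed.

Lemma lin_zero (R : realFieldType) (a : R) (p : {poly R}) :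
  (forall s, 0 <= s * a + s ^+ 2 * p.[s]) -> a = 0.
Proof.
move=> H.
set K := \sum_(i < size p) `|p`_i| + `|a| + 1.
have K0 : 0 <= \sum_(i < size p) `|p`_i| by apply: sumr_ge0 => i _.
have Ka : `|a| <= K by rewrite /K; have := normr_ge0 a; lra.
have Kpos : 0 < K by rewrite /K; have := normr_ge0 a; lra.
set s := - a / (2 * K).
have hs : s * (2 * K) = - a by rewrite /s mulfVK // mulf_neq0 // gt_eqF.
have hs1 : `|s| <= 1.
  rewrite ler_norml; move: Ka; rewrite ler_norml => /andP [h1 h2].
  apply/andP; split; nra.
have hP : p.[s] <= K.
  have := @poly_bound _ p s hs1; have := ler_norm p.[s]; have := normr_ge0 a.
  rewrite /K; lra.
have := H s.
have h2 : s ^+ 2 * p.[s] <= s ^+ 2 * K by apply: ler_wpM2l => //; exact: sqr_ge0.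
move=> h3.
have hs0 : K * s ^+ 2 <= 0 by nra.
have : s ^+ 2 <= 0 by nra.
move=> h4; have : s = 0 by nra.
move=> h5; move: hs; rewrite h5 mul0r => /eqP; rewrite eq_sym oppr_eq0 => /eqP //.
Qed.



Lemma key_det (R : realFieldType) n (S0 E P : 'M[R]_n) :
  S0 \in unitmx -> 0 < \det S0 ->
  (forall s : R, \det S0 <= \det (S0 + s *: E + s ^+ 2 *: P)) ->
  \tr (invmx S0 *m E) = 0.
Proof.
move=> U D H.
set B := invmx S0 *m E; set C := invmx S0 *m P.
pose Np : 'M[{poly R}]_n := map_mx polyC B + 'X *: map_mx polyC C.
pose Mp : 'M[{poly R}]_n := 1%:M + 'X *: Np.
have [r Hr] := dvdpP _ _ (det1X _ _ Np).
pose p := (\tr C)%:P + r.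
apply: (@lin_zero _ _ p) => s.
have HS : S0 + s *: E + s ^+ 2 *: P = S0 *m (1%:M + s *: B + s ^+ 2 *: C).
  by rewrite !mulmxDr mulmx1 -!scalemxAr /B /C !mulKVmx.
clearbody B C.
have HM : map_mx (horner_eval s) Mp = 1%:M + s *: B + s ^+ 2 *: C.
  apply/matrixP => i j; rewrite !mxE /horner_eval !hornerE hornerMn hornerC; ring.
have Hg : \det (1%:M + s *: B + s ^+ 2 *: C) = 1 + (s * \tr B + s ^+ 2 * p.[s]).
  rewrite -HM det_map_mx /= /horner_eval.
  move/eqP: Hr; rewrite subr_eq => /eqP ->.
  rewrite /p !(hornerD, hornerM, hornerXn, hornerX, hornerC) /Np /mxtrace horner_sum.
  have -> : \sum_(i < n) ((map_mx polyC B + 'X *: map_mx polyC C) i i).[s]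
     = \sum_(i < n) B i i + s * \sum_(i < n) C i i.
    rewrite mulr_sumr -big_split /=; apply: eq_bigr => i _.
    by rewrite !mxE !hornerE.
  ring.
have := H s; rewrite HS det_mulmx Hg.
rewrite -{1}[\det S0]mulr1 ler_pM2l // lerDl.
by [].
Qed.



Lemma tr_sq_eq0 (R : realFieldType) m n (M : 'M[R]_(m, n)) :
  \tr (M *m M^T) = 0 -> M = 0.
Proof.
rewrite /mxtrace => H; apply/matrixP => i j; rewrite mxE.
have H1 : forall i, \sum_j (M i j * M i j) = 0.
  move=> i0; move/eqP: H; rewrite psumr_eq0.
    move/allP => /(_ i0 (mem_index_enum _)) /eqP.
    by rewrite mxE; under eq_bigr do rewrite mxE.
  by move=> i1 _; rewrite mxE; apply: sumr_ge0 => k _; rewrite mxE -expr2 sqr_ge0.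
move/eqP: (H1 i); rewrite psumr_eq0; last by move=> k _; rewrite -expr2 sqr_ge0.
move/allP => /(_ j (mem_index_enum _)) /eqP.
by move/eqP; rewrite mulf_eq0 orbb => /eqP.
Qed.

Lemma expand_err (R : realFieldType) q (e g : 'cV[R]_q) (s : R) :
  (e - s *: g) *m (e - s *: g)^T =
  e *m e^T + s *: (- (g *m e^T + e *m g^T)) + s ^+ 2 *: (g *m g^T).
Proof.
apply/matrixP => i j; rewrite !mxE !big_ord1 !mxE; ring.
Qed.

Lemma zero_unit (R : comUnitRingType) n p (M : 'M[R]_(n, p)) :
  (0 : 'M[R]_n) \in unitmx -> M = 0.
Proof.
move=> U; have := mulVmx U; rewrite mulmx0 => H.
by rewrite -[M]mul1mx -H mul0mx.
Qed.
Arguments zero_unit {R n p} M _.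



Lemma sig_expand (R : realType) (c k h T q : nat) (Ni : R) (e g : nat -> 'cV[R]_q) (s : R) :
  Ni *: tsum c k h T q q (fun t => (e t - s *: g t) *m (e t - s *: g t)^T) =
  Ni *: tsum c k h T q q (fun t => e t *m (e t)^T)
  + s *: (- (Ni *: tsum c k h T q q (fun t => g t *m (e t)^T + e t *m (g t)^T)))
  + s ^+ 2 *: (Ni *: tsum c k h T q q (fun t => g t *m (g t)^T)).
Proof.
rewrite /tsum; under eq_bigr do rewrite expand_err.
rewrite !big_split /= -!scaler_sumr sumrN !scalerDr !scalerN !scalerA.
by rewrite -scalerDr -big_split /= scalerA (mulrC s Ni) (mulrC (s ^+ 2) Ni).
Qed.

Lemma tr_cond (R : realType) (c k h T q : nat) (Si : 'M[R]_q) (Ni : R)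
  (e g : nat -> 'cV[R]_q) : Si^T = Si ->
  \tr (Si *m - (Ni *: tsum c k h T q q (fun t => g t *m (e t)^T + e t *m (g t)^T)))
  = - (2 * Ni) * \sum_((c + k).+1 <= t < (T - h).+1) \tr (Si *m (g t *m (e t)^T)).
Proof.
move=> HS.
rewrite mulmxN -scalemxAr /tsum mulmx_sumr raddfN /= mxtraceZ raddf_sum /=.
have -> : \sum_((c + k).+1 <= t < (T - h).+1) \tr (Si *m (g t *m (e t)^T + e t *m (g t)^T))
  = \sum_((c + k).+1 <= t < (T - h).+1) (2 * \tr (Si *m (g t *m (e t)^T))).
  apply: eq_bigr => t _; rewrite mulmxDr mxtraceD.
  suff -> : \tr (Si *m (e t *m (g t)^T)) = \tr (Si *m (g t *m (e t)^T)) by ring.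
  by rewrite -mxtrace_tr !trmx_mul trmxK HS mxtrace_mulC.
rewrite -mulr_sumr; ring.
Qed.



Lemma tsum_reindex (R : realType) c k h T n n' (F : nat -> 'M[R]_(n, n')) i j :
  (tsum c k h T n n' F) i j = \sum_(l < Neff c k h T) F ((c + k).+1 + l)%N i j.
Proof.
rewrite /tsum summxE /Neff -{1}[(c + k).+1]add0n big_addn subSS subnDA big_mkord.
by apply: eq_bigr => l _; rewrite addnC.
Qed.

Lemma YF_eq (R : realType) q m c k h T (y : nat -> 'cV[R]_q) (z : nat -> 'cV[R]_m) beta :
  (Ymat q c k h T y)^T *m Fmat m c k h T z beta =
  tsum c k h T q k.+1 (fun t => y (t + h)%N *m (fvec m c k z beta t)^T).
Proof.
apply/matrixP => i j; rewrite tsum_reindex !mxE.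
apply: eq_bigr => l _.
by rewrite !mxE big_ord1 !mxE.
Qed.

Lemma FF_eq (R : realType) m c k h T (z : nat -> 'cV[R]_m) beta :
  (Fmat m c k h T z beta)^T *m Fmat m c k h T z beta =
  tsum c k h T k.+1 k.+1 (fun t => fvec m c k z beta t *m (fvec m c k z beta t)^T).
Proof.
apply/matrixP => i j; rewrite tsum_reindex !mxE.
apply: eq_bigr => l _.
by rewrite !mxE big_ord1 !mxE.
Qed.



Theorem theorem4 (R : realType) (q m c k h T : nat)
  (y : nat -> 'cV[R]_q) (z : nat -> 'cV[R]_m)
  (betah : 'cV[R]_(c.+1 * m)) (Gamh : 'M[R]_(q, k.+1)) :
  (forall (beta : 'cV[R]_(c.+1 * m)) (Gam : 'M[R]_(q, k.+1)),
      G2 q m c k h T y z betah Gamh <= G2 q m c k h T y z beta Gam) ->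
  let Sig := SigmaHat q m c k h T y z betah Gamh in
  let N := (Neff c k h T)%:R : R in
  let A := N^-1 *: tsum c k h T (c.+1 * m) (c.+1 * m)
      (fun t => (calX m c k z t)^T *m Gamh^T *m invmx Sig *m Gamh *m calX m c k z t) in
  let b := N^-1 *: tsum c k h T (c.+1 * m) 1
      (fun t => (calX m c k z t)^T *m Gamh^T *m invmx Sig *m y (t + h)%N) in
  0 < \det Sig ->
  A \in unitmx ->
  (Fmat m c k h T z betah)^T *m Fmat m c k h T z betah \in unitmx ->
  betah = invmx A *m b /\ Gamh = calG q m c k h T y z betah.
Proof.
move=> Hmin Sig N A b Hdet HA HF.
have SigU : Sig \in unitmx by rewrite unitmxE unitfE (gt_eqF Hdet).
set e := err q m c k h y z betah Gamh.
set Si := invmx Sig.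
have SigE : Sig = N^-1 *: tsum c k h T q q (fun t => e t *m (e t)^T) by [].
have HS : Sig^T = Sig.
  rewrite SigE linearZ /= /tsum raddf_sum /=; congr (_ *: _).
  by apply: eq_bigr => t _; rewrite trmx_mul trmxK.
have HSi : Si^T = Si by rewrite /Si trmx_inv HS.
have [N0 | N0] := eqVneq N^-1 0.
  have S0 : Sig = 0 by rewrite SigE N0 scale0r.
  have A0 : A = 0 by rewrite /A N0 scale0r.
  rewrite S0 in SigU; rewrite A0 in HA.
  split; first by rewrite A0 (zero_unit betah HA) (zero_unit (invmx 0 *m b) HA).
  by rewrite (zero_unit Gamh SigU) (zero_unit (calG q m c k h T y z betah) SigU).
have FOC : forall (g : nat -> 'cV[R]_q),
   (forall s : R, \det Sig <= \det (N^-1 *: tsum c k h T q q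
        (fun t => (e t - s *: g t) *m (e t - s *: g t)^T))) ->
   \sum_((c + k).+1 <= t < (T - h).+1) \tr (Si *m (g t *m (e t)^T)) = 0.
  move=> g Hg.
  have := @key_det _ _ Sig _ (N^-1 *: tsum c k h T q q (fun t => g t *m (g t)^T)) SigU Hdet.
  move=> /(_ (- (N^-1 *: tsum c k h T q q (fun t => g t *m (e t)^T + e t *m (g t)^T)))).
  rewrite -/Si tr_cond // => H.
  have {H} : - (2 * N^-1) * \sum_((c + k).+1 <= t < (T - h).+1) \tr (Si *m (g t *m (e t)^T)) = 0.
    by apply: H => s; have := Hg s; rewrite sig_expand -SigE.
  move/eqP; rewrite mulf_eq0 oppr_eq0 mulf_eq0 (negbTE N0) pnatr_eq0 /= => /eqP //.
pose v := tsum c k h T (c.+1 * m) 1 (fun t => (calX m c k z t)^T *m Gamh^T *m Si *m e t).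
have Hv : forall d : 'cV[R]_(c.+1 * m), \tr (d^T *m v) = 0.
  move=> d.
  have := FOC (fun t => Gamh *m calX m c k z t *m d).
  have Herr : forall s t, err q m c k h y z (betah + s *: d) Gamh t
      = e t - s *: (Gamh *m calX m c k z t *m d).
    by move=> s t; rewrite /e /err mulmxDr -scalemxAr opprD addrA.
  have Hs : forall s : R, \det Sig <= \det (N^-1 *: tsum c k h T q q
        (fun t => (e t - s *: (Gamh *m calX m c k z t *m d)) *m
                  (e t - s *: (Gamh *m calX m c k z t *m d))^T)).
    move=> s; have := Hmin (betah + s *: d) Gamh; rewrite /G2 -/Sig /SigmaHat /tsum.
    by under eq_bigr do rewrite Herr.
  move=> /(_ Hs) H0; rewrite -H0 /v /tsum mulmx_sumr raddf_sum /=.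
  apply: eq_bigr => t _.
  apply: esym; rewrite -mxtrace_tr !trmx_mul !trmxK HSi -!mulmxA mxtrace_mulC.
  by rewrite !mulmxA.
have v0 : v = 0.
  have := Hv v => H; apply: trmx_inj; rewrite trmx0; apply: tr_sq_eq0.
  by rewrite trmxK.
have vE : v = tsum c k h T (c.+1 * m) 1
      (fun t => (calX m c k z t)^T *m Gamh^T *m Si *m y (t + h)%N)
  - tsum c k h T (c.+1 * m) (c.+1 * m)
      (fun t => (calX m c k z t)^T *m Gamh^T *m Si *m Gamh *m calX m c k z t) *m betah.
  rewrite /v /tsum mulmx_suml -sumrB; apply: eq_bigr => t _.
  by rewrite /e /err mulmxBr !mulmxA.
have HAb : A *m betah = b.
  rewrite /A /b -scalemxAl; congr (_ *: _).
  by apply/eqP; rewrite eq_sym -subr_eq0 -vE v0.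
split; first by rewrite -HAb mulKmx.
pose W := tsum c k h T q k.+1 (fun t => e t *m (fvec m c k z betah t)^T).
have HW : forall D : 'M[R]_(q, k.+1), \tr (Si *m D *m W^T) = 0.
  move=> D.
  have := FOC (fun t => D *m fvec m c k z betah t).
  have Herr : forall s t, err q m c k h y z betah (Gamh + s *: D) t
      = e t - s *: (D *m fvec m c k z betah t).
    by move=> s t; rewrite /e /err /fvec !mulmxDl -!scalemxAl opprD addrA !mulmxA.
  have Hs : forall s : R, \det Sig <= \det (N^-1 *: tsum c k h T q q
        (fun t => (e t - s *: (D *m fvec m c k z betah t)) *m
                  (e t - s *: (D *m fvec m c k z betah t))^T)).
    move=> s; have := Hmin betah (Gamh + s *: D); rewrite /G2 -/Sig /SigmaHat /tsum.
    by under eq_bigr do rewrite Herr.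
  move=> /(_ Hs) H0; rewrite -H0 /W /tsum raddf_sum /= mulmx_sumr raddf_sum /=.
  apply: eq_bigr => t _.
  by rewrite trmx_mul trmxK !mulmxA.
have W0 : W = 0.
  have := HW (Sig *m W); rewrite mulmxA /Si (mulVmx SigU) mul1mx.
  exact: tr_sq_eq0.
have WE : W = (Ymat q c k h T y)^T *m Fmat m c k h T z betah
   - Gamh *m ((Fmat m c k h T z betah)^T *m Fmat m c k h T z betah).
  rewrite YF_eq FF_eq /W /tsum mulmx_sumr -sumrB; apply: eq_bigr => t _.
  by rewrite /e /err mulmxBl /fvec !mulmxA.
move/eqP: WE; rewrite W0 eq_sym subr_eq0 => /eqP HYF.
by rewrite /calG HYF mulmxK.
Qed.
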